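(* Let $F$ be a field of characteristic zero, $G$ a finite group, $A$ a $G$-graded PI-algebra, $n$ a positive integer, and let $\mathcal{U}(n;A)\subseteq M_n(\mathcal{U}_G(A))$ be the algebra generated by the generic matrices $\xi_k^{(g)}=(x_{ij,k}^{(g)}+T_G(A))_{1\le i,j\le n}$, $k\in\mathbb{N}$, $g\in G$. Let $f_1,\dots,f_n\in\mathcal{U}(n;A)$, fix $k\in\{1,\dots,n\}$, and let $f_i^k$ denote the $k$-th column of $f_i$ (a column vector with entries in $\mathcal{U}_G(A)$). Then $\{f_1^k,\dots,f_n^k\}$ is linearly independent over $F$ if and only if $\{f_1,\dots,f_n\}$ is linearly independent over $F$.
   Context: All algebras are associative and unitary. The $x_{ij,k}^{(g)}$ are pairwise distinct free variables of degree $g$. $F\langle X\rangle$ is the free associative algebra on a disjoint union $X=\bigcup_{g\in G}X^g$ of countable sets of variables of degree $g$, naturally $G$-graded. For a $G$-graded algebra $A$, $T_G(A)$ is its ideal of graded polynomial identities and $\mathcal{U}_G(A)=F\langle X\rangle/T_G(A)$ its relatively free $G$-graded algebra. *)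

(* Defs.v *)
From HB Require Import structures.
From mathcomp Require Import all_boot all_order all_algebra all_fingroup.
From mathcomp Require Import finmap.
From mathcomp.multinomials Require Import monalg.
Set Implicit Arguments. Unset Strict Implicit. Unset Printing Implicit Defensive.
Import GRing.Theory.
Local Open Scope ring_scope.

(* Free associative unital algebra F<V> on a set of variables V:       *)
Definition FreeAlg (F : fieldType) (V : choiceType) := {malg F[{fmonom V}]}.

Definition fvar (F : fieldType) (V : choiceType) (v : V) : FreeAlg F V :=
  mkmalgU (fmu v) 1.

Definition feval (F : fieldType) (V : choiceType) (A : algType F) (s : V -> A)
   (p : FreeAlg F V) : A :=
  \sum_(m <- msupp p) p@_m *: \prod_(v <- fmonom_val m) s v.

Definition is_grading (F : fieldType) (gT : finGroupType) (A : algType F)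
    (gr : gT -> A -> Prop) : Prop :=
  [/\ (forall g, gr g 0),
      (forall g a b, gr g a -> gr g b -> gr g (a + b)),
      (forall g (c : F) a, gr g a -> gr g (c *: a)) &
  [/\ (forall g h a b, gr g a -> gr h b -> gr (g * h)%g (a * b)),

      (forall a : A, exists e : gT -> A, (forall g, gr g (e g)) /\ a = \sum_g e g)
    & (forall e : gT -> A, (forall g, gr g (e g)) -> \sum_g e g = 0 ->
         forall g, e g = 0)]].

Definition is_PI (F : fieldType) (A : algType F) : Prop :=
  exists f : FreeAlg F nat, f != 0 /\ forall s : nat -> A, feval s f = 0.

(* Graded variables: X = disjoint union of the X^g, X^g = {g} x N^3,   *)
(* the variable (g,(i,j,k)) being x_{ij,k}^{(g)}, of degree g.          *)
Definition gvar (gT : finGroupType) : choiceType := (gT * (nat * nat * nat))%type.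

Definition FX (F : fieldType) (gT : finGroupType) := FreeAlg F (gvar gT).

Definition graded_subst (F : fieldType) (gT : finGroupType) (A : algType F)
    (gr : gT -> A -> Prop) (s : gvar gT -> A) : Prop :=
  forall v : gvar gT, gr v.1 (s v).

Definition TG (F : fieldType) (gT : finGroupType) (A : algType F)
    (gr : gT -> A -> Prop) (p : FX F gT) : Prop :=
  forall s, graded_subst gr s -> feval s p = 0.

(* Generic matrices xi_k^(g) = (x_{ij,k}^(g))_{i,j}  (indices 0-based) *)
Definition generic_mx (F : fieldType) (gT : finGroupType) (n : nat)
    (g : gT) (k : nat) : 'M[FX F gT]_n :=
  \matrix_(i < n, j < n) fvar F (g, (nat_of_ord i, nat_of_ord j, k)).

(* Its image in M_n(U_G(A)) = M_n(F<X>/T_G(A)) is U(n;A); so elements of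
   U(n;A) are represented by elements of this subalgebra. *)
Inductive gen_by_generic (F : fieldType) (gT : finGroupType) (n : nat) :
    'M[FX F gT]_n -> Prop :=
| GenXi g k : gen_by_generic (generic_mx F n g k)
| GenScal (c : F) : gen_by_generic ((c%:MP : FX F gT)%:M)
| GenAdd M N : gen_by_generic M -> gen_by_generic N -> gen_by_generic (M + N)
| GenMul M N : gen_by_generic M -> gen_by_generic N -> gen_by_generic (M *m N).

(* Linear independence over F of the family f_1..f_m of p x q matrices
   over U_G(A) = F<X>/T_G(A), stated on representatives: a vanishing
   F-linear combination in M_{p,q}(U_G(A)) means every entry of the
   combination lies in T_G(A). *)
Definition lin_indep_modTG (F : fieldType) (gT : finGroupType) (A : algType F)
    (gr : gT -> A -> Prop) (m p q : nat) (f : 'I_m -> 'M[FX F gT]_(p, q)) : Prop :=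
  forall c : 'I_m -> F,
    (forall i j, TG gr (\sum_(l < m) c l *: f l i j)) -> forall l, c l = 0.

(* Main.v *)
Require Import Defs.
From HB Require Import structures.
From mathcomp Require Import all_boot all_order all_algebra all_fingroup.
From mathcomp Require Import finmap.
From mathcomp.multinomials Require Import monalg.
Set Implicit Arguments. Unset Strict Implicit. Unset Printing Implicit Defensive.
Import GRing.Theory.
Local Open Scope ring_scope.

Section Feval.
Variables (F : fieldType) (V : choiceType) (A : algType F) (s : V -> A).

Definition hs (m : fmonom V) : A := \prod_(v <- fmonom_val m) s v.

Lemma hs_mmorph : mmorphism hs.
Proof.
split; last by rewrite /hs fm1 big_nil.
by move=> x y; rewrite /hs fmM big_cat.
Qed.

HB.instance Definition _ := isMultiplicative.Build (fmonom V) A hs hs_mmorph.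

Lemma fevalE p : feval s p = mmap (in_alg A) hs p.
Proof.
rewrite /feval mmapE; apply: eq_bigr => m _.
by rewrite /= mulr_algl.
Qed.

Lemma feval_rmorph : multiplicative (feval s).
Proof.
have := @commr_mmap_is_multiplicative (fmonom V) F A (in_alg A) hs.
move=> H; split.
  move=> x y; rewrite !fevalE; apply H => g m m'. exact: comm_alg.
rewrite fevalE; apply H => g m m'; exact: comm_alg.
Qed.

Lemma fevalD p q : feval s (p + q) = feval s p + feval s q.
Proof. by rewrite !fevalE mmapD. Qed.

Lemma feval0 : feval s 0 = 0.
Proof. by rewrite !fevalE mmap0. Qed.

Lemma fevalM p q : feval s (p * q) = feval s p * feval s q.
Proof. by case: feval_rmorph => ->. Qed.

Lemma fevalZ (c : F) p : feval s (c *: p) = c *: feval s p.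
Proof.
rewrite !fevalE (mmapZ (f := in_alg A) (h := hs)) /= mulr_algl //.
Qed.

Lemma fevalC (c : F) : feval s (c%:MP) = c%:A.
Proof. by rewrite fevalE (mmapC (f := in_alg A) (h := hs)). Qed.

Lemma feval_var v : feval s (fvar F v) = s v.
Proof.
by rewrite fevalE /fvar mmapU /= scale1r mul1r /hs fmuE /= big_seq1.
Qed.

Lemma feval_sum (I : Type) (r : seq I) (P : pred I) (G : I -> FreeAlg F V) :
  feval s (\sum_(i <- r | P i) G i) = \sum_(i <- r | P i) feval s (G i).
Proof. by rewrite fevalE raddf_sum; apply: eq_bigr => i _; rewrite fevalE. Qed.
End Feval.

Section Perm.
Variables (F : fieldType) (gT : finGroupType) (A : algType F) (n : nat).
Variable (σ : {perm 'I_n}).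

Definition sn (a : nat) : nat := oapp (fun i : 'I_n => val (σ i)) a (insub a).

Lemma sn_ord (i : 'I_n) : sn i = σ i.
Proof. by rewrite /sn valK. Qed.

Definition rho (v : gvar gT) : gvar gT := (v.1, (sn v.2.1.1, sn v.2.1.2, v.2.2)).

Definition Pm (M : 'M[FX F gT]_n) := forall (s : gvar gT -> A) i j,
  feval s (M (σ i) (σ j)) = feval (s \o rho) (M i j).

Lemma Pm_gen M : gen_by_generic M -> Pm M.
Proof.
elim=> {M}.
- move=> g k s i j; rewrite !mxE !feval_var /= /rho /=.
  by rewrite !sn_ord.
- move=> c s i j; rewrite !mxE (inj_eq perm_inj).
  by case: (i == j); rewrite ?mulr1n ?mulr0n ?fevalC ?feval0.
- move=> M N _ HM _ HN s i j; by rewrite !mxE !fevalD HM HN.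
- move=> M N _ HM _ HN s i j; rewrite !mxE !feval_sum.
  rewrite (reindex_inj (@perm_inj _ σ)) /=.
  by apply: eq_bigr => l _; rewrite !fevalM HM HN.
Qed.

End Perm.

Theorem corollary6p2 (F : fieldType) (gT : finGroupType) (A : algType F)
    (gr : gT -> A -> Prop) (n : nat) (f : 'I_n -> 'M[FX F gT]_n) (k : 'I_n) :
  [pchar F] =i pred0 ->
  is_grading gr ->
  is_PI A ->
  (0 < n)%N ->
  (forall i, gen_by_generic (f i)) ->
  (lin_indep_modTG gr (fun i => col k (f i)) <-> lin_indep_modTG gr f).
Proof.
move=> _ _ _ _ Hgen; split.
  move=> Hc c Hf; apply: Hc => i j.
  under eq_bigr do rewrite mxE.
  exact: Hf.
move=> Hf c Hc; apply: Hf => i j.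
pose h : 'M[FX F gT]_n := \matrix_(a, b) \sum_(l < n) c l *: f l a b.
have hE : forall a b, h a b = \sum_(l < n) c l *: f l a b.
  by move=> a b; rewrite /h mxE.
have Hk : forall a, TG gr (h a k).
  move=> a; rewrite hE; have := Hc a ord0.
  by under eq_bigr do rewrite mxE.
have Ph : forall σ, Pm A σ h.
  move=> σ s a b; rewrite !hE !feval_sum; apply: eq_bigr => l _.
  by rewrite !fevalZ (@Pm_gen _ _ A _ σ _ (Hgen l) s).
rewrite -hE.
pose σ := tperm k j.
have -> : h i j = h (σ (σ i)) (σ k) by rewrite tpermK tpermL.
move=> s Hs; rewrite (Ph σ s (σ i) k); apply: Hk.
move=> v; exact: (Hs (rho σ v)).
Qed.
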